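(* Assume Assumption 1 and that there are reals $\xi_i$, $i\in M$, with ${\bf A}^i=\xi_i{\bf I}$ for all $i\in M$. Assume $d^*=\min_{j\in N}D_{jj}$ is attained at the unique index $j_1$. Then the Shor relaxation (S) is exact, i.e. $v^\star=c^\star$, if there are no $\boldsymbol{\mu}\in\mathbb{R}^m$ and $x_{j_1},z_{j_1}\in\mathbb{R}$ satisfying: $d^*+\sum_{i\in M}\mu_i\xi_i=0$; $c_{j_1}+\sum_{i\in M}\mu_ia_{ij_1}=0$; for all $i\in M$: $\xi_iz_{j_1}+\sum_{j\ne j_1}\xi_i\Big(\frac{c_j+\sum_{l\in M}\mu_la_{lj}}{D_{jj}-d^*}\Big)^2+2a_{ij_1}x_{j_1}-2\sum_{j\ne j_1}a_{ij}\frac{c_j+\sum_{l\in M}\mu_la_{lj}}{D_{jj}-d^*}\le b_i$; $x_{j_1}^2\le z_{j_1}$; $\mu_i\ge 0$ for all $i\in M$.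
   Context: Let $N=\{1,\dots,n\}$ and $M=\{1,\dots,m\}$. Let ${\bf D}$ and ${\bf A}^i$ ($i\in M$) be real diagonal $n\times n$ matrices, ${\bf c},{\bf a}_i\in\mathbb{R}^n$ ($a_{ij}$ denotes the $j$-th entry of ${\bf a}_i$) and $b_i\in\mathbb{R}$. The diagonal QCQP is (P): $c^\star=\inf\{{\bf x}^\top{\bf D}{\bf x}+2{\bf c}^\top{\bf x} : {\bf x}^\top{\bf A}^i{\bf x}+2{\bf a}_i^\top{\bf x}\le b_i,\ i\in M\}$. Its Shor relaxation is (S): $v^\star=\inf\{{\bf D}\bullet{\bf X}+2{\bf c}^\top{\bf x} : {\bf A}^i\bullet{\bf X}+2{\bf a}_i^\top{\bf x}\le b_i\ (i\in M),\ {\bf X}-{\bf x}{\bf x}^\top\succeq {\bf O}\}$, where ${\bf P}\bullet{\bf Q}=\mathrm{trace}({\bf P}{\bf Q})$. Assumption 1: (i) the feasible region of (P) is nonempty; (ii) there exists $\bar{\bf y}\ge 0$ with $\sum_{i\in M}\bar y_i{\bf A}^i\succ{\bf O}$; (iii) the feasible region of (S) has nonempty interior. *)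

(* Defs.v *)
From HB Require Import structures.
From mathcomp Require Import all_boot all_order all_algebra.
From mathcomp Require Import all_classical all_reals.
From mathcomp Require Import ereal.
Set Implicit Arguments. Unset Strict Implicit. Unset Printing Implicit Defensive.
Import Order.TTheory GRing.Theory Num.Theory.
Local Open Scope ring_scope.

Section QCQP.
Variables (R : realType) (n m : nat).

Definition qform (P : 'M[R]_n) (u v : 'cV[R]_n) : R := (u^T *m P *m v) ord0 ord0.
Definition dotv (u v : 'cV[R]_n) : R := (u^T *m v) ord0 ord0.
Definition frob (P Q : 'M[R]_n) : R := \tr (P *m Q).

Definition psd (P : 'M[R]_n) : Prop := P^T = P /\ forall v : 'cV[R]_n, 0 <= qform P v v.
Definition pd (P : 'M[R]_n) : Prop :=
  P^T = P /\ forall v : 'cV[R]_n, v != 0 -> 0 < qform P v v.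

Variables (D : 'M[R]_n) (c : 'cV[R]_n)
          (A : 'I_m -> 'M[R]_n) (a : 'I_m -> 'cV[R]_n) (b : 'I_m -> R).

Definition P_feasible (x : 'cV[R]_n) : Prop :=
  forall i, qform (A i) x x + 2 * dotv (a i) x <= b i.
Definition P_obj (x : 'cV[R]_n) : R := qform D x x + 2 * dotv c x.
Definition cstar : \bar R := ereal_inf [set (P_obj x)%:E | x in P_feasible].

Definition S_feasible (x : 'cV[R]_n) (X : 'M[R]_n) : Prop :=
  X^T = X /\ (forall i, frob (A i) X + 2 * dotv (a i) x <= b i) /\ psd (X - x *m x^T).
Definition S_obj (x : 'cV[R]_n) (X : 'M[R]_n) : R := frob D X + 2 * dotv c x.
Definition vstar : \bar R :=
  ereal_inf [set (S_obj p.1 p.2)%:E | p in (fun p => S_feasible p.1 p.2)].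

Definition assumption1 : Prop :=
  (exists x, P_feasible x) /\
  (exists y : 'I_m -> R, (forall i, 0 <= y i) /\ pd (\sum_(i < m) y i *: A i)) /\
  (* (iii) nonempty interior of the feasible set of (S), in the space
     R^n x Sym_n, with the (entrywise) max-distance *)
  (exists (x0 : 'cV[R]_n) (X0 : 'M[R]_n) (eps : R), 0 < eps /\
     X0^T = X0 /\
     forall (x : 'cV[R]_n) (X : 'M[R]_n), X^T = X ->
       (forall j k, `|x j k - x0 j k| < eps) ->
       (forall j k, `|X j k - X0 j k| < eps) ->
       S_feasible x X).

End QCQP.

(* Main.v *)
Require Import Defs.
From HB Require Import structures.
From mathcomp Require Import all_boot all_order all_algebra.
From mathcomp Require Import all_classical all_reals all_analysis.
From mathcomp Require Import ereal.
From mathcomp Require Import ring lra.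
Set Implicit Arguments. Unset Strict Implicit. Unset Printing Implicit Defensive.
Import Order.TTheory GRing.Theory Num.Theory.
Import numFieldNormedType.Exports.
Local Open Scope classical_set_scope.
Local Open Scope ring_scope.

Section Farkas.
Variable R : realType.

Definition dotr k (u v : 'rV[R]_k) : R := \sum_j u 0 j * v 0 j.

Lemma dotrDl k (u v w : 'rV[R]_k) : dotr (u + v) w = dotr u w + dotr v w.
Proof. by rewrite /dotr -big_split; apply: eq_bigr => j _; rewrite mxE mulrDl. Qed.
Lemma dotrDr k (u v w : 'rV[R]_k) : dotr w (u + v) = dotr w u + dotr w v.
Proof. by rewrite /dotr -big_split; apply: eq_bigr => j _; rewrite mxE mulrDr. Qed.
Lemma dotrZl k a (u w : 'rV[R]_k) : dotr (a *: u) w = a * dotr u w.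
Proof. by rewrite /dotr mulr_sumr; apply: eq_bigr => j _; rewrite mxE mulrA. Qed.
Lemma dotrZr k a (u w : 'rV[R]_k) : dotr w (a *: u) = a * dotr w u.
Proof. by rewrite /dotr mulr_sumr; apply: eq_bigr => j _; rewrite mxE mulrCA. Qed.
Lemma dotrNl k (u w : 'rV[R]_k) : dotr (- u) w = - dotr u w.
Proof. by rewrite -scaleN1r dotrZl mulN1r. Qed.
Lemma dotrNr k (u w : 'rV[R]_k) : dotr w (- u) = - dotr w u.
Proof. by rewrite -scaleN1r dotrZr mulN1r. Qed.
Lemma dotrBl k (u v w : 'rV[R]_k) : dotr (u - v) w = dotr u w - dotr v w.
Proof. by rewrite dotrDl dotrNl. Qed.
Lemma dotrBr k (u v w : 'rV[R]_k) : dotr w (u - v) = dotr w u - dotr w v.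
Proof. by rewrite dotrDr dotrNr. Qed.

Lemma dotr_self_eq0 k (w : 'rV[R]_k) : dotr w w <= 0 -> w = 0.
Proof.
move=> H; have H0 : dotr w w = 0.
  by apply/eqP; rewrite eq_le H /dotr sumr_ge0 // => j _; rewrite -expr2 sqr_ge0.
apply/rowP => j; rewrite mxE; apply/eqP; rewrite -sqrf_eq0 expr2.
move/eqP: H0; rewrite /dotr psumr_eq0; last by move=> i _; rewrite -expr2 sqr_ge0.
move/allP/(_ j (mem_index_enum _))/implyP/(_ isT).
by []. Qed.

Lemma farkas k m : forall (v : 'I_m -> 'rV[R]_k) (w : 'rV[R]_k),
  (forall d, (forall i, dotr (v i) d <= 0) -> dotr w d <= 0) ->
  exists mu : 'I_m -> R, (forall i, 0 <= mu i) /\ w = \sum_i mu i *: v i.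
Proof.
elim: m => [|m IH] v w H.
  exists (fun _ => 0); split => //; rewrite big_ord0.
  by apply: dotr_self_eq0; apply: H; case.
pose u := v ord_max; pose v' := fun i : 'I_m => v (widen_ord (leqnSn m) i).
have liftE (j : 'I_m) : lift ord_max j = widen_ord (leqnSn m) j.
  by apply: val_inj; rewrite /= /bump leqNgt ltn_ord add0n.
have [H'|H'] := pselect (forall d, (forall i, dotr (v' i) d <= 0) -> dotr w d <= 0).
  have [mu [mu0 ->]] := IH v' w H'.
  exists (fun i : 'I_m.+1 => if insub (val i) is Some j then mu j else 0).
  split.
    by move=> i; case: (insub _) => // j.
  rewrite big_ord_recr /= insubF ?ltnn // scale0r addr0.
  by apply: eq_bigr => j _; rewrite valK.
move/existsNP: H' => [d0 /not_implyP [Hd0 Hwd0]].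
have wpos : 0 < dotr w d0 by rewrite ltNge; apply/negP.
set s := dotr u d0.
have spos : 0 < s.
  rewrite ltNge; apply/negP => sle; apply: Hwd0; apply: H => i.
  by case: (unliftP ord_max i) => [j ->|->] //; rewrite liftE; exact: Hd0.
have sne : s != 0 by rewrite gt_eqF.
pose v'' := fun i => v' i - (dotr (v' i) d0 / s) *: u.
pose w' := w - (dotr w d0 / s) *: u.
have key r d : dotr (r - (dotr r d0 / s) *: u) d = dotr r (d - (dotr u d / s) *: d0).
  by rewrite dotrBl dotrBr dotrZl dotrZr; congr (_ - _); ring.
have H'' : forall d, (forall i, dotr (v'' i) d <= 0) -> dotr w' d <= 0.
  move=> d Hd; rewrite /w' key; apply: H => i.
  case: (unliftP ord_max i) => [j ->|->].
    by rewrite liftE -key; exact: Hd.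
  rewrite dotrBr dotrZr -/u -/s divfK // subrr //.
have [lam [lam0 Hw']] := IH v'' w' H''.
exists (fun i : 'I_m.+1 => if insub (val i) is Some j then lam j
        else (dotr w d0 - \sum_j lam j * dotr (v' j) d0) / s).
split.
  move=> i; case: (insub _) => [j|]; first exact: lam0.
  apply: divr_ge0; last exact: ltW. rewrite subr_ge0 (le_trans _ (ltW wpos)) //.
  by apply: sumr_le0 => j _; rewrite mulr_ge0_le0.
rewrite big_ord_recr /= insubF ?ltnn //.
under eq_bigr => j _ do rewrite valK.
have E : \sum_i lam i *: v'' i =
    \sum_i lam i *: v' i - (\sum_i lam i * (dotr (v' i) d0 / s)) *: u.
  rewrite scaler_suml -sumrB; apply: eq_bigr => i _.
  by rewrite /v'' scalerBr scalerA.
rewrite {1}(_ : w = w' + (dotr w d0 / s) *: u); last by rewrite /w' subrK.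
rewrite Hw' E -addrA; congr (_ + _); rewrite addrC -scalerBl; congr (_ *: _).
rewrite mulrBl; congr (_ - _); rewrite [RHS]mulr_suml; apply: eq_bigr => j _.
by rewrite mulrA.
Qed.

End Farkas.


Section Cpt.
Variables (R : realType) (k : nat).

Lemma cont_sum (I : finType) (F : I -> 'rV[R]_k -> R) :
  (forall j, continuous (F j)) -> continuous (fun p => \sum_j F j p).
Proof.
move=> Fc.
have H : forall s : seq I, continuous (fun p => \sum_(j <- s) F j p).
  elim=> [|j s IH].
    have -> : (fun p => \sum_(j <- [::]) F j p) = fun _ => 0.
      by apply: funext => p; rewrite big_nil.
    exact: cst_continuous.
  have -> : (fun p => \sum_(i <- j :: s) F i p) =
      fun p => F j p + \sum_(i <- s) F i p.
    by apply: funext => p; rewrite big_cons.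
  by move=> p; apply: continuousD; [exact: Fc|exact: IH].
exact: H.
Qed.

Lemma cont_M (f g : 'rV[R]_k -> R) : continuous f -> continuous g ->
  continuous (fun p => f p * g p).
Proof. move=> fc gc p; exact: (@continuousM R _ f g p (fc p) (gc p)). Qed.
Lemma cont_D (f g : 'rV[R]_k -> R) : continuous f -> continuous g ->
  continuous (fun p => f p + g p).
Proof. move=> fc gc p; exact: (@continuousD R _ _ f g p (fc p) (gc p)). Qed.
Lemma cont_B (f g : 'rV[R]_k -> R) : continuous f -> continuous g ->
  continuous (fun p => f p - g p).
Proof. move=> fc gc p; exact: (@continuousB R _ _ f g p (fc p) (gc p)). Qed.
Lemma cont_c (r : R) : continuous (fun _ : 'rV[R]_k => r).
Proof. exact: cst_continuous. Qed.
Lemma cont_coord i : continuous (fun p : 'rV[R]_k => p 0 i).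
Proof. exact: coord_continuous. Qed.

Lemma closed_le0 (f : 'rV[R]_k -> R) : continuous f -> closed [set p | f p <= 0].
Proof.
move=> fc; have -> : [set p | f p <= 0] = f @^-1` [set x : R | x <= 0] by [].
by apply: preimage_closed; [move=> x _; exact: fc | exact: closed_le].
Qed.

End Cpt.


Section Pts.
Variables (R : realType) (n m : nat).
Variables (D : 'M[R]_n) (c : 'cV[R]_n) (a : 'I_m -> 'cV[R]_n) (b : 'I_m -> R)
  (xi : 'I_m -> R) (j1 : 'I_n).

Definition W (j : 'I_n) : 'I_n.+1 := widen_ord (leqnSn n) j.
Definition xx (p : 'rV[R]_n.+1) j := p 0 (W j).
Definition qq (p : 'rV[R]_n.+1) := p 0 ord_max.
Definition pt (f : 'I_n -> R) (q : R) : 'rV[R]_n.+1 :=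
  \row_k (if insub (val k) is Some j then f j else q).

Lemma xx_pt f q j : xx (pt f q) j = f j.
Proof. by rewrite /xx /pt mxE /W /= valK. Qed.
Lemma qq_pt f q : qq (pt f q) = q.
Proof. by rewrite /qq /pt mxE insubF //= ltnn. Qed.
Lemma dotr_pt f q d : dotr (pt f q) d = \sum_j f j * xx d j + q * qq d.
Proof.
rewrite /dotr big_ord_recr /=; congr (_ + _).
  by apply: eq_bigr => j _; rewrite -/(W j) -/(xx (pt f q) j) xx_pt.
by rewrite -/(qq (pt f q)) qq_pt.
Qed.
Lemma xxD p d t j : xx (p + t *: d) j = xx p j + t * xx d j.
Proof. by rewrite /xx !mxE. Qed.
Lemma qqD p d t : qq (p + t *: d) = qq p + t * qq d.
Proof. by rewrite /qq !mxE. Qed.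

Definition ds := D j1 j1.
Definition nrm2 p := \sum_j xx p j ^+ 2.
Definition gg i p := xi i * qq p + 2 * \sum_j a i j 0 * xx p j - b i.
Definition FF p := \sum_j (D j j - ds) * xx p j ^+ 2 + 2 * \sum_j c j 0 * xx p j
  + ds * qq p.
Definition gradg i := pt (fun j => 2 * a i j 0) (xi i).
Definition gradF p := pt (fun j => 2 * (D j j - ds) * xx p j + 2 * c j 0) ds.

Lemma gg_lin i p d t : gg i (p + t *: d) = gg i p + t * dotr (gradg i) d.
Proof.
rewrite /gg dotr_pt qqD /=.
have e1 : \sum_j a i j 0 * xx (p + t *: d) j =
   \sum_j a i j 0 * xx p j + t * \sum_j a i j 0 * xx d j.
  by rewrite !mulr_sumr -!big_split; apply: eq_bigr => j _; rewrite xxD /=; ring.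
have e2 : \sum_j 2 * a i j 0 * xx d j = 2 * \sum_j a i j 0 * xx d j.
  by rewrite mulr_sumr; apply: eq_bigr => j _; ring.
rewrite e1 e2; ring.
Qed.

Lemma FF_quad p d t : FF (p + t *: d) =
  FF p + t * dotr (gradF p) d + t ^+ 2 * \sum_j (D j j - ds) * xx d j ^+ 2.
Proof.
rewrite /FF dotr_pt qqD /=.
have e1 : \sum_j (D j j - ds) * xx (p + t *: d) j ^+ 2 =
   \sum_j (D j j - ds) * xx p j ^+ 2
   + t * \sum_j 2 * (D j j - ds) * xx p j * xx d j
   + t ^+ 2 * \sum_j (D j j - ds) * xx d j ^+ 2.
  by rewrite !mulr_sumr -!big_split; apply: eq_bigr => j _; rewrite xxD /=; ring.
have e2 : \sum_j c j 0 * xx (p + t *: d) j =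
   \sum_j c j 0 * xx p j + t * \sum_j c j 0 * xx d j.
  by rewrite !mulr_sumr -!big_split; apply: eq_bigr => j _; rewrite xxD /=; ring.
have e3 : \sum_j (2 * (D j j - ds) * xx p j + 2 * c j 0) * xx d j =
   \sum_j 2 * (D j j - ds) * xx p j * xx d j + 2 * \sum_j c j 0 * xx d j.
  by rewrite !mulr_sumr -!big_split; apply: eq_bigr => j _ /=; ring.
rewrite e1 e2 e3; ring.
Qed.

Lemma nrm2_quad p d t : nrm2 (p + t *: d) =
  nrm2 p + t * (2 * \sum_j xx p j * xx d j) + t ^+ 2 * nrm2 d.
Proof.
rewrite /nrm2 !mulr_sumr -!big_split; apply: eq_bigr => j _; rewrite xxD /=; ring.
Qed.

Definition Kset := [set p | nrm2 p <= qq p /\ forall i, gg i p <= 0].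

Lemma cont_xx j : continuous (fun p : 'rV[R]_n.+1 => xx p j).
Proof. exact: cont_coord. Qed.
Lemma cont_qq : continuous (fun p : 'rV[R]_n.+1 => qq p).
Proof. exact: cont_coord. Qed.

Lemma cont_nrm2 : continuous nrm2.
Proof.
have -> : nrm2 = fun p => \sum_j xx p j * xx p j.
  by apply: funext => p; apply: eq_bigr => j _; rewrite expr2.
by apply: cont_sum => j; apply: cont_M; exact: cont_xx.
Qed.

Lemma cont_gg i : continuous (gg i).
Proof.
apply: cont_B; last exact: cont_c.
apply: cont_D; apply: cont_M; try exact: cont_c; first exact: cont_qq.
by apply: cont_sum => j; apply: cont_M; [exact: cont_c|exact: cont_xx].
Qed.

Lemma cont_FF : continuous FF.
Proof.
apply: cont_D; last by apply: cont_M; [exact: cont_c|exact: cont_qq].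
apply: cont_D.
  apply: cont_sum => j; apply: cont_M; first exact: cont_c.
  have -> : (fun p => xx p j ^+ 2) = fun p => xx p j * xx p j.
    by apply: funext => p; rewrite expr2.
  by apply: cont_M; exact: cont_xx.
apply: cont_M; first exact: cont_c.
by apply: cont_sum => j; apply: cont_M; [exact: cont_c|exact: cont_xx].
Qed.

Lemma Kclosed : closed Kset.
Proof.
have -> : Kset = [set p | nrm2 p - qq p <= 0] `&`
    \bigcap_(i in setT) [set p | gg i p <= 0].
  apply/seteqP; split => p /=.
    by move=> [h1 h2]; split; [rewrite subr_le0|move=> i _; exact: h2].
  by move=> [h1 h2]; split; [rewrite -subr_le0|move=> i; exact: h2].
apply: closedI; first by apply: closed_le0; apply: cont_B; [exact: cont_nrm2|exact: cont_qq].
by apply: closed_bigI => i _; apply: closed_le0; exact: cont_gg.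
Qed.

Lemma liftE (j : 'I_n) : lift ord_max j = W j.
Proof. by apply: val_inj; rewrite /= /bump leqNgt ltn_ord add0n. Qed.

Lemma sq_le_nrm2 p j : xx p j ^+ 2 <= nrm2 p.
Proof.
rewrite /nrm2 (bigD1 j) //= lerDl; apply: sumr_ge0 => i _; exact: sqr_ge0.
Qed.

Lemma nrm2_ge0 p : 0 <= nrm2 p.
Proof. by apply: sumr_ge0 => i _; exact: sqr_ge0. Qed.

Lemma Kbox (y : 'I_m -> R) : (forall i, 0 <= y i) -> 0 < \sum_i y i * xi i ->
  exists M, forall p, Kset p -> forall k, `|p 0 k| <= M.
Proof.
move=> y0; set s := \sum_i y i * xi i => spos.
pose al j := \sum_i y i * a i j 0.
pose be := \sum_i y i * b i.
pose A2 := \sum_j al j ^+ 2.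
pose Qb := 2 * (s * be + 2 * A2) / s ^+ 2.
exists (Qb + 1) => p [Kn Kg].
set q := qq p.
set T := \sum_j al j * xx p j.
have e : \sum_i y i * gg i p = s * q + 2 * T - be.
  rewrite /gg /s /T /be /al.
  have -> : \sum_i y i * (xi i * q + 2 * \sum_j a i j 0 * xx p j - b i) =
      \sum_i ((y i * xi i) * q + 2 * (y i * \sum_j a i j 0 * xx p j) - y i * b i).
    by apply: eq_bigr => i _; ring.
  rewrite sumrB big_split /= -mulr_suml -mulr_sumr; congr (_ + 2 * _ - _).
  rewrite (eq_bigr (fun i => \sum_j y i * (a i j 0 * xx p j))); last by move=> i _; rewrite mulr_sumr.
  rewrite exchange_big /=; apply: eq_bigr => j _; rewrite mulr_suml.
  by apply: eq_bigr => i _; rewrite mulrA.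
have h1 : s * q + 2 * T - be <= 0.
  by rewrite -e; apply: sumr_le0 => i _; apply: mulr_ge0_le0.
have h3 : - (2 * s * T) <= 2 * A2 + s ^+ 2 / 2 * nrm2 p.
  rewrite /T /A2 /nrm2 [2 * s * _]mulr_sumr -sumrN [s ^+ 2 / 2 * _]mulr_sumr [2 * \sum_j al j ^+ 2]mulr_sumr -big_split /=.
  apply: ler_sum => j _.
  have := sqr_ge0 (2 * al j + s * xx p j); nra.
have P1 : s * (s * q + 2 * T - be) <= 0 by rewrite pmulr_rle0.
have P2 : s ^+ 2 * (nrm2 p - q) <= 0.
  by apply: mulr_ge0_le0; [exact: sqr_ge0|rewrite subr_le0].
have hq : q <= Qb.
  rewrite /Qb ler_pdivlMr; last by rewrite exprn_gt0.
  lra.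
have q0 : 0 <= q by apply: le_trans Kn; exact: nrm2_ge0.
move=> k; case: (unliftP ord_max k) => [j ->|->].
  rewrite liftE -/(xx p j).
  have hx := sq_le_nrm2 p j.
  have hn : `|xx p j| ^+ 2 = xx p j ^+ 2 by rewrite real_normK ?num_real.
  have hxq : xx p j ^+ 2 <= Qb by apply: le_trans hx (le_trans Kn hq).
  have := sqr_ge0 (`|xx p j| - 1).
  rewrite sqrrB1 hn; lra.
by rewrite -/(qq p) -/q ger0_norm //; lra.
Qed.

Lemma Kcompact (y : 'I_m -> R) : (forall i, 0 <= y i) -> 0 < \sum_i y i * xi i ->
  compact Kset.
Proof.
move=> y0 spos; have [M HM] := Kbox y0 spos.
have Bc : compact [set v : 'rV[R]_n.+1 | forall i, `[(- M), M]%classic (v ord0 i)].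
  exact: (@rV_compact _ n.+1 (fun _ => `[(- M), M]%classic) (fun _ => @segment_compact R (- M) M)).
apply: subclosed_compact Kclosed Bc _.
move=> p Kp i /=; rewrite in_itv /= -ler_norml; exact: HM.
Qed.

Lemma Kmin (y : 'I_m -> R) : (forall i, 0 <= y i) -> 0 < \sum_i y i * xi i ->
  Kset !=set0 -> exists2 p, Kset p & forall p', Kset p' -> FF p <= FF p'.
Proof.
move=> y0 spos Kne.
have [p Kp Hp] := EVT_min_rV Kne (Kcompact y0 spos) (continuous_subspaceT cont_FF).
exists p; first by rewrite inE in Kp.
by move=> p' Kp'; apply: Hp; rewrite inE.
Qed.

Lemma small_pos (r : 'I_m -> R) (e1 e2 e3 : R) : 0 < e1 -> 0 < e2 -> 0 < e3 ->
  (forall i, 0 < r i) ->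
  exists t, [/\ 0 < t, t <= e1, t <= e2, t <= e3 & forall i, t <= r i].
Proof.
move=> h1 h2 h3 hr.
pose S := e1^-1 + e2^-1 + e3^-1 + \sum_i (r i)^-1.
have hS : 0 <= \sum_i (r i)^-1 by apply: sumr_ge0 => i _; rewrite invr_ge0 ltW.
have i1 : 0 < e1^-1 by rewrite invr_gt0.
have i2 : 0 < e2^-1 by rewrite invr_gt0.
have i3 : 0 < e3^-1 by rewrite invr_gt0.
have Spos : 0 < S by rewrite /S; lra.
have key x : 0 < x -> x^-1 <= S -> S^-1 <= x.
  move=> xp hx; rewrite -(invrK x) lef_pV2 // ?posrE ?invr_gt0 //.
exists S^-1; split.
- by rewrite invr_gt0.
- by apply: key => //; rewrite /S; lra.
- by apply: key => //; rewrite /S; lra.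
- by apply: key => //; rewrite /S; lra.
- move=> i; apply: key => //.
  have : (r i)^-1 <= \sum_i (r i)^-1.
    rewrite (bigD1 i) //= lerDl; apply: sumr_ge0 => k _; rewrite invr_ge0 ltW //.
  rewrite /S; lra.
Qed.

Lemma xx_sum (I : finType) (F : I -> 'rV[R]_n.+1) j :
  xx (\sum_i F i) j = \sum_i xx (F i) j.
Proof. by rewrite /xx summxE. Qed.
Lemma qq_sum (I : finType) (F : I -> 'rV[R]_n.+1) :
  qq (\sum_i F i) = \sum_i qq (F i).
Proof. by rewrite /qq summxE. Qed.
Lemma xxZ t M j : xx (t *: M) j = t * xx M j.
Proof. by rewrite /xx mxE. Qed.
Lemma qqZ t M : qq (t *: M) = t * qq M.
Proof. by rewrite /qq mxE. Qed.
Lemma xxN M j : xx (- M) j = - xx M j.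
Proof. by rewrite /xx mxE. Qed.
Lemma qqN M : qq (- M) = - qq M.
Proof. by rewrite /qq mxE. Qed.

Lemma kkt p : Kset p -> (forall p', Kset p' -> FF p <= FF p') -> nrm2 p < qq p ->
  exists mu : 'I_m -> R, [/\ forall i, 0 <= mu i, ds + \sum_i mu i * xi i = 0 &
    forall j, (D j j - ds) * xx p j + c j 0 + \sum_i mu i * a i j 0 = 0].
Proof.
move=> [Kn Kg] Hmin Hlt.
pose act i := gg i p == 0.
pose v i := (if act i then 1 else 0) *: gradg i.
have Far : forall d, (forall i, dotr (v i) d <= 0) -> dotr (- gradF p) d <= 0.
  move=> d Hd; rewrite dotrNl oppr_le0 leNgt; apply/negP => hneg.
  set del := dotr (gradF p) d in hneg.
  set Qd := \sum_j (D j j - ds) * xx d j ^+ 2.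
  set al := 2 * \sum_j xx p j * xx d j - qq d.
  set sig := qq p - nrm2 p.
  have sigp : 0 < sig by rewrite /sig subr_gt0.
  have N0 := nrm2_ge0 d.
  pose r i := if act i then 1 else - gg i p / (`|dotr (gradg i) d| + 1).
  have rpos i : 0 < r i.
    rewrite /r; case: ifP => // hact; apply: divr_gt0; last by rewrite ltr_wpDl.
    by rewrite oppr_gt0 lt_neqAle Kg andbT; move/negbT: hact.
  have ndel : 0 < - del / 2 by rewrite divr_gt0 // oppr_gt0.
  have e2p : 0 < sig / (`|al| + nrm2 d + 1).
    by rewrite divr_gt0 // ltr_wpDl // addr_ge0.
  have e3p : 0 < - del / 2 / (`|Qd| + 1) by rewrite divr_gt0 // ltr_wpDl.
  have [t [t0 t1 t2 t3 tr]] := small_pos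
    (e1 := 1) (e2 := sig / (`|al| + nrm2 d + 1)) (e3 := - del / 2 / (`|Qd| + 1))
    ltr01 e2p e3p rpos.
  rewrite ler_pdivlMr in t2; last by rewrite ltr_wpDl // addr_ge0.
  rewrite ler_pdivlMr in t3; last by rewrite ltr_wpDl.
  have Kp' : Kset (p + t *: d).
    split.
      rewrite nrm2_quad qqD.
      have e1 : t * al <= t * `|al| := ler_wpM2l (ltW t0) (ler_norm _).
      have e2 : t ^+ 2 * nrm2 d <= t * nrm2 d.
        by rewrite expr2 -mulrA; apply: ler_piMl => //; rewrite mulr_ge0 // ltW.
      rewrite /al /sig in e1 t2; nra.
    move=> i; rewrite gg_lin.
    have := tr i; rewrite /r; case: ifP => hact.
      move=> _; have := Hd i; rewrite /v hact dotrZl mul1r => hd.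
      move/eqP: hact => ->; rewrite add0r.
      by rewrite mulr_ge0_le0 // ltW.
    rewrite ler_pdivlMr; last by rewrite ltr_wpDl.
    have e1 : t * dotr (gradg i) d <= t * `|dotr (gradg i) d| :=
      ler_wpM2l (ltW t0) (ler_norm _).
    nra.
  have := Hmin _ Kp'; rewrite FF_quad -/Qd -/del.
  have e1 : t ^+ 2 * Qd <= t * (t * `|Qd|).
    rewrite expr2 -mulrA; exact: (ler_wpM2l (ltW t0) (ler_wpM2l (ltW t0) (ler_norm _))).
  have e2 : t * (t * `|Qd|) <= t * (- del / 2).
    have h : t * `|Qd| <= - del / 2 by lra.
    exact: (ler_wpM2l (ltW t0) h).
  nra.
have [mu [mu0 Hw]] := farkas Far.
pose mu' i := mu i * (if act i then 1 else 0).
have Hw' : - gradF p = \sum_i mu' i *: gradg i.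
  by rewrite Hw; apply: eq_bigr => i _; rewrite /v scalerA.
exists mu'; split.
- by move=> i; rewrite /mu'; case: ifP; rewrite ?mulr1 ?mulr0.
- have := congr1 qq Hw'; rewrite qqN qq_sum /gradF qq_pt.
  under eq_bigr => i _ do rewrite qqZ /gradg qq_pt.
  by move=> <-; rewrite subrr.
- move=> j; have := congr1 (fun M => xx M j) Hw'; rewrite /= xxN xx_sum /gradF xx_pt.
  rewrite (eq_bigr (fun i => mu' i * (2 * a i j 0))); last by move=> i _; rewrite xxZ /gradg xx_pt.
  rewrite (_ : \sum_i mu' i * (2 * a i j 0) = 2 * \sum_i mu' i * a i j 0); last first.
    by rewrite mulr_sumr; apply: eq_bigr => i _; ring.
  move=> h; lra.
Qed.

End Pts.


Section Mx.
Variables (R : realType) (n : nat).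

Lemma dotvE (u x : 'cV[R]_n) : dotv u x = \sum_j u j 0 * x j 0.
Proof. by rewrite /dotv mxE; apply: eq_bigr => j _; rewrite mxE. Qed.

Lemma qform_diag (P : 'M[R]_n) (x : 'cV[R]_n) : is_diag_mx P ->
  qform P x x = \sum_j P j j * x j 0 ^+ 2.
Proof.
move/is_diag_mxP => Pd; rewrite /qform mxE; apply: eq_bigr => k _.
rewrite mxE (bigD1 k) //= big1 ?addr0; last first.
  by move=> l hl; rewrite Pd ?mulr0.
by rewrite mxE expr2; ring.
Qed.

Lemma qform_scalar (r : R) (x : 'cV[R]_n) :
  qform r%:M x x = r * \sum_j x j 0 ^+ 2.
Proof.
rewrite qform_diag ?scalar_mx_is_diag // mulr_sumr; apply: eq_bigr => j _.
by rewrite mxE eqxx mulr1n.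
Qed.

Lemma frob_scalar (r : R) (X : 'M[R]_n) : frob r%:M X = r * \tr X.
Proof. by rewrite /frob mul_scalar_mx mxtraceZ. Qed.

Lemma frob_diag (P X : 'M[R]_n) : is_diag_mx P -> frob P X = \sum_j P j j * X j j.
Proof.
move/is_diag_mxP => Pd; rewrite /frob /mxtrace; apply: eq_bigr => j _.
rewrite mxE (bigD1 j) //= big1 ?addr0 // => l hl; by rewrite Pd ?mul0r // eq_sym.
Qed.

Lemma qform_delta (P : 'M[R]_n) j : qform P (delta_mx j 0) (delta_mx j 0) = P j j.
Proof.
rewrite /qform mxE (bigD1 j) //= big1 ?addr0; last first.
  by move=> k hk; rewrite [X in _ * X]mxE (negbTE hk) /= mulr0.
rewrite !mxE !eqxx mulr1 (bigD1 j) //= big1 ?addr0; last first.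
  by move=> k hk; rewrite !mxE (negbTE hk) /= mul0r.
by rewrite !mxE !eqxx mul1r.
Qed.

Lemma frob_outer (P : 'M[R]_n) (x : 'cV[R]_n) : frob P (x *m x^T) = qform P x x.
Proof.
rewrite /frob /qform mulmxA mxtrace_mulC mulmxA /mxtrace big_ord1.
by congr (_ _ _); apply: val_inj.
Qed.

Lemma outer_entry (x : 'cV[R]_n) j : (x *m x^T) j j = x j 0 ^+ 2.
Proof. by rewrite mxE big_ord1 mxE expr2. Qed.

End Mx.

Section Main.
Variables (R : realType) (n m : nat) (D : 'M[R]_n) (c : 'cV[R]_n)
  (A : 'I_m -> 'M[R]_n) (a : 'I_m -> 'cV[R]_n) (b : 'I_m -> R)
  (xi : 'I_m -> R) (j1 : 'I_n).

Lemma LD (HA : forall i, A i = (xi i)%:M) (x : 'cV[R]_n) :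
  P_feasible A a b x -> S_feasible A a b x (x *m x^T) /\ S_obj D c x (x *m x^T) = P_obj D c x.
Proof.
move=> Px; split; last by rewrite /S_obj /P_obj frob_outer.
split; first by rewrite trmx_mul trmxK.
split; first by move=> i; rewrite frob_outer; exact: Px.
split; first by rewrite subrr trmx0.
by move=> v; rewrite subrr /qform mulmx0 mul0mx mxE.
Qed.

Lemma LB (HA : forall i, A i = (xi i)%:M) (x : 'cV[R]_n) :
  P_feasible A a b x -> Kset a b xi (pt (fun j => x j 0) (\sum_j x j 0 ^+ 2)).
Proof.
move=> Px; split.
  by rewrite /nrm2 qq_pt; under eq_bigr => j _ do rewrite xx_pt.
move=> i; have := Px i; rewrite HA qform_scalar dotvE /gg qq_pt.
  have -> : \sum_j a i j 0 * xx (pt (fun j => x j 0) (\sum_j x j 0 ^+ 2)) j =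
    \sum_j a i j 0 * x j 0 by apply: eq_bigr => j _; rewrite xx_pt.
by rewrite subr_le0.
Qed.

Lemma LC (Dd : is_diag_mx D) (HA : forall i, A i = (xi i)%:M) p :
  Kset a b xi p -> nrm2 p = qq p ->
  P_feasible A a b (\col_j xx p j) /\ P_obj D c (\col_j xx p j) = FF D c j1 p.
Proof.
move=> [Kn Kg] Heq.
have hq : \sum_j (\col_j xx p j) j 0 ^+ 2 = qq p.
  by rewrite -Heq; apply: eq_bigr => j _; rewrite mxE.
have hd (u : 'cV[R]_n) : dotv u (\col_j xx p j) = \sum_j u j 0 * xx p j.
  by rewrite dotvE; apply: eq_bigr => j _; rewrite mxE.
split.
  by move=> i; rewrite HA qform_scalar hq hd -subr_le0; exact: Kg.
rewrite /P_obj /FF qform_diag // hd -Heq /nrm2.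
have -> : \sum_j D j j * (\col_j xx p j) j 0 ^+ 2 =
  \sum_j (D j j - ds D j1) * xx p j ^+ 2 + ds D j1 * \sum_j xx p j ^+ 2.
  by rewrite mulr_sumr -big_split; apply: eq_bigr => j _; rewrite mxE /=; ring.
ring.
Qed.

Lemma LA (Dd : is_diag_mx D) (HA : forall i, A i = (xi i)%:M)
  (Hu : forall j : 'I_n, j != j1 -> D j1 j1 < D j j) (x : 'cV[R]_n) X :
  S_feasible A a b x X ->
  Kset a b xi (pt (fun j => x j 0) (\tr X)) /\
  FF D c j1 (pt (fun j => x j 0) (\tr X)) <= S_obj D c x X.
Proof.
move=> [XT [Hc [_ Hpsd]]].
have hdiag j : x j 0 ^+ 2 <= X j j.
  have := Hpsd (delta_mx j 0); rewrite qform_delta !mxE big_ord1 !mxE.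
  by rewrite subr_ge0 expr2.
have hx j : xx (pt (fun j => x j 0) (\tr X)) j = x j 0 by rewrite xx_pt.
split; first split.
- rewrite /nrm2 qq_pt /mxtrace; apply: ler_sum => j _; rewrite hx; exact: hdiag.
- move=> i; have := Hc i; rewrite HA frob_scalar dotvE /gg qq_pt.
  have -> : \sum_j a i j 0 * xx (pt (fun j => x j 0) (\tr X)) j =
    \sum_j a i j 0 * x j 0 by apply: eq_bigr => j _; rewrite hx.
  by rewrite subr_le0.
rewrite /FF /S_obj frob_diag // qq_pt dotvE.
have -> : \sum_j c j 0 * xx (pt (fun j => x j 0) (\tr X)) j =
    \sum_j c j 0 * x j 0 by apply: eq_bigr => j _; rewrite hx.
have -> : \sum_j (D j j - ds D j1) * xx (pt (fun j => x j 0) (\tr X)) j ^+ 2 =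
    \sum_j (D j j - ds D j1) * x j 0 ^+ 2 by apply: eq_bigr => j _; rewrite hx.
rewrite /mxtrace.
suff : \sum_j (D j j - ds D j1) * x j 0 ^+ 2 + ds D j1 * \sum_j X j j <=
  \sum_j D j j * X j j by lra.
rewrite mulr_sumr -big_split; apply: ler_sum => j _ /=.
have hD : 0 <= D j j - ds D j1.
  rewrite subr_ge0 /ds; case: (eqVneq j j1) => [->|hj]; first by [].
  exact: ltW (Hu j hj).
have h2 : 0 <= X j j - x j 0 ^+ 2 by rewrite subr_ge0 hdiag.
have := mulr_ge0 hD h2; lra.
Qed.

End Main.


Theorem mainTheorem7 (R : realType) (n m : nat)
    (D : 'M[R]_n) (c : 'cV[R]_n)
    (A : 'I_m -> 'M[R]_n) (a : 'I_m -> 'cV[R]_n) (b : 'I_m -> R)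
    (xi : 'I_m -> R) (j1 : 'I_n) :
  is_diag_mx D ->
  (forall i, A i = (xi i)%:M) ->
  assumption1 A a b ->
  (* d* = min_j D_jj is attained at the unique index j1 *)
  (forall j : 'I_n, j != j1 -> D j1 j1 < D j j) ->
  ~ (exists (mu : 'I_m -> R) (x1 z1 : R),
       let dstar := D j1 j1 in
       let w := fun j : 'I_n =>
         (c j ord0 + \sum_(l < m) mu l * a l j ord0) / (D j j - dstar) in
       [/\ dstar + \sum_(i < m) mu i * xi i = 0,
           c j1 ord0 + \sum_(i < m) mu i * a i j1 ord0 = 0,
           (forall i : 'I_m,
              xi i * z1 + \sum_(j < n | j != j1) xi i * (w j) ^+ 2
              + 2 * a i j1 ord0 * x1
              - 2 * \sum_(j < n | j != j1) a i j ord0 * w j <= b i),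
           x1 ^+ 2 <= z1
         & forall i : 'I_m, 0 <= mu i]) ->
  vstar D c A a b = cstar D c A a b.
Proof.
move=> Dd HA [[x0 Px0] [[y [y0 [_ ypd]]] _]] Hu Hno.
have spos : 0 < \sum_i y i * xi i.
  have e1 : delta_mx j1 0 != 0 :> 'cV[R]_n.
    apply/negP => /eqP h; have := congr1 (fun M : 'cV[R]_n => M j1 0) h.
    by rewrite !mxE !eqxx /= => /eqP; rewrite oner_eq0.
  move: (ypd _ e1); rewrite qform_delta summxE.
  rewrite (eq_bigr (fun i => y i * xi i)) // => i _.
  by rewrite mxE HA mxE eqxx mulr1n.
have Kne : (Kset a b xi !=set0)%classic by exists (pt (fun j => x0 j 0) (\sum_j x0 j 0 ^+ 2)); exact: (@LB R n m A a b xi HA x0 Px0).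
have [p Kp Hmin] := @Kmin R n m D c a b xi j1 y y0 spos Kne.
have Heq : nrm2 p = qq p.
  have Kp' := Kp; case: Kp' => Kn Kg.
  apply/eqP; rewrite eq_le Kn /= leNgt; apply/negP => hlt.
  have [mu [mu0 hmu hj]] := @kkt R n m D c a b xi j1 p Kp Hmin hlt.
  apply: Hno; exists mu, (xx p j1), (qq p - \sum_(j < n | j != j1) xx p j ^+ 2).
  cbv zeta.
  have z0 : (0 : 'I_1) = ord0 by apply: val_inj.
  rewrite /ds in hmu hj; rewrite z0 in hj.
  have hw j : j != j1 -> (c j ord0 + \sum_(l < m) mu l * a l j ord0) / (D j j - D j1 j1)
      = - xx p j.
    move=> hjj; have dne : D j j - D j1 j1 != 0 by rewrite subr_eq0 gt_eqF // Hu.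
    have hN : c j ord0 + \sum_(l < m) mu l * a l j ord0 = - (xx p j * (D j j - D j1 j1)).
      have := hj j; lra.
    by rewrite hN mulNr mulfK.
  have hz : nrm2 p = xx p j1 ^+ 2 + \sum_(j < n | j != j1) xx p j ^+ 2.
    by rewrite /nrm2 (bigD1 j1).
  split => //.
  - have := hj j1; rewrite subrr mul0r add0r; lra.
  - move=> i; set z := \sum_(j < n | j != j1) xx p j ^+ 2.
    rewrite (eq_bigr (fun j => xi i * xx p j ^+ 2)); last by move=> j hjj /=; rewrite hw // sqrrN.
    rewrite [X in _ - 2 * X](eq_bigr (fun j => - (a i j ord0 * xx p j))); last by move=> j hjj /=; rewrite hw // mulrN.
    rewrite sumrN -mulr_sumr -/z.
    have := Kg i; rewrite /gg (bigD1 j1) //= z0; lra.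
  - lra.
have [Pf Pobj] := @LC R n m D c A a b xi j1 Dd HA p Kp Heq.
apply/eqP; rewrite eq_le; apply/andP; split.
  apply: le_ereal_inf_tmp => _ [x Px <-].
  have [HS HO] := @LD R n m D c A a b xi HA x Px.
  apply: ereal_inf_lbound; exists (x, x *m x^T) => //=; by rewrite HO.
apply: le_ereal_inf_tmp => _ [[x X] /= HS <-].
apply: (@le_trans _ _ (P_obj D c (\col_j xx p j))%:E).
  by apply: ereal_inf_lbound; exists (\col_j xx p j).
rewrite lee_fin Pobj.
have [KX FX] := @LA R n m D c A a b xi j1 Dd HA Hu x X HS.
exact: le_trans (Hmin _ KX) FX.
Qed.
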